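(* Every consistent piece-wise quadratic function is semi-consistent.
   Context: A continuous $g$ is piece-wise quadratic with $N$ pieces if there exist breakpoints $-\infty=\tau_0<\tau_1<\dots<\tau_N=+\infty$ and quadratic $p_1,\dots,p_N$ with $g=p_k$ on $[\tau_{k-1},\tau_k]$ and $p_k\ne p_{k+1}$ as functions; it is consistent if every $p_k$ is strongly convex and $g=\min_kp_k$ on $\mathbb{R}$. For piece-wise quadratic $h$ with strongly convex pieces and breakpoints $\tau_k$, the indexing function is $I_h(\beta)=\min\{k:\ \exists\,\alpha^\star\in\arg\max_\alpha\{\beta\alpha-h(\alpha)\}\text{ with }\tau_{k-1}\le\alpha^\star\le\tau_k\}$. A piece-wise quadratic $g$ with breakpoints $\tau_0,\dots,\tau_N$ and pieces $p_1,\dots,p_N$ is semi-consistent if: (i) $p_1,\dots,p_N$ are strongly convex; (ii) $p_k(\alpha)\le\min\{p_{k-1}(\alpha),p_{k+1}(\alpha)\}$ for all $\alpha\in[\tau_{k-1},\tau_k]$ and $2\le k\le N-1$; (iii) for every $k\le N$, the indexing function $I_{g_k}$ is non-decreasing, where $g_k(\alpha)=g(\alpha)$ for $\alpha\le\tau_k$ and $g_k(\alpha)=p_k(\alpha)$ for $\alpha>\tau_k$ (so $g_k$ has pieces $p_1,\dots,p_k$ and breakpoints $\tau_0,\dots,\tau_{k-1},+\infty$). *)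

(* Defs.v *)
From Stdlib Require Import Reals Lra Lia Arith.
Open Scope R_scope.

Record quad := Quad { qa : R; qb : R; qc : R }.

Definition qeval (p : quad) (x : R) : R := qa p * x ^ 2 + qb p * x + qc p.

Definition strongly_convex (p : quad) : Prop := 0 < qa p.

(* With N pieces and breakpoints tau_1 < ... < tau_{N-1}
   (tau_0 = -oo, tau_N = +oo implicit), x lies in the closed piece k,
   i.e. tau_{k-1} <= x <= tau_k, for 1 <= k <= N. *)
Definition in_piece (N : nat) (tau : nat -> R) (k : nat) (x : R) : Prop :=
  (1 <= k <= N)%nat /\
  (k = 1%nat \/ tau (k - 1)%nat <= x) /\
  (k = N \/ x <= tau k).

Definition piecewise_quadratic (N : nat) (tau : nat -> R) (p : nat -> quad)
    (g : R -> R) : Prop :=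
  (1 <= N)%nat /\
  (forall k, (1 <= k)%nat -> (k + 1 <= N - 1)%nat -> tau k < tau (k + 1)%nat) /\
  continuity g /\
  (forall k x, in_piece N tau k x -> g x = qeval (p k) x) /\
  (forall k, (1 <= k)%nat -> (k + 1 <= N)%nat ->
     ~ (forall x, qeval (p k) x = qeval (p (k + 1)%nat) x)).

Definition consistent (N : nat) (tau : nat -> R) (p : nat -> quad)
    (g : R -> R) : Prop :=
  piecewise_quadratic N tau p g /\
  (forall k, (1 <= k <= N)%nat -> strongly_convex (p k)) /\
  (forall x, (forall k, (1 <= k <= N)%nat -> g x <= qeval (p k) x) /\
             exists k, (1 <= k <= N)%nat /\ g x = qeval (p k) x).

Definition is_argmax_conj (h : R -> R) (beta a : R) : Prop :=
  forall x, beta * x - h x <= beta * a - h a.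

(* index_of N tau h beta k  <->  I_h(beta) = k, i.e. k is the minimum of
   { k : exists alpha* in argmax_alpha (beta alpha - h alpha)
          with tau_{k-1} <= alpha* <= tau_k }. *)
Definition index_of (N : nat) (tau : nat -> R) (h : R -> R) (beta : R)
    (k : nat) : Prop :=
  (exists a, is_argmax_conj h beta a /\ in_piece N tau k a) /\
  (forall j, (exists a, is_argmax_conj h beta a /\ in_piece N tau j a) ->
     (k <= j)%nat).

Definition index_nondecreasing (N : nat) (tau : nat -> R) (h : R -> R) : Prop :=
  forall beta1 beta2 k1 k2, beta1 <= beta2 ->
    index_of N tau h beta1 k1 -> index_of N tau h beta2 k2 -> (k1 <= k2)%nat.

(* g_k: equal to g on alpha <= tau_k and to p_k on alpha > tau_k
   (for k = N, tau_N = +oo and g_N = g). *)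
Definition gk (N : nat) (tau : nat -> R) (p : nat -> quad) (g : R -> R)
    (k : nat) (x : R) : R :=
  if Nat.ltb k N then (if Rle_dec x (tau k) then g x else qeval (p k) x)
  else g x.

Definition semi_consistent (N : nat) (tau : nat -> R) (p : nat -> quad)
    (g : R -> R) : Prop :=
  piecewise_quadratic N tau p g /\
  (forall k, (1 <= k <= N)%nat -> strongly_convex (p k)) /\
  (forall k x, (2 <= k <= N - 1)%nat -> tau (k - 1)%nat <= x <= tau k ->
     qeval (p k) x <= Rmin (qeval (p (k - 1)%nat) x) (qeval (p (k + 1)%nat) x)) /\
  (* (iii): g_k has pieces p_1..p_k and breakpoints tau_1..tau_{k-1}, +oo *)
  (forall k, (1 <= k <= N)%nat -> index_nondecreasing k tau (gk N tau p g k)).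

(* Main.v *)
Require Import Defs.
From Stdlib Require Import Reals Lra Lia.
Open Scope R_scope.

Lemma find_piece (K : nat) (tau : nat -> R) (a : R) :
  forall m, (1 <= m <= K)%nat -> (m = K \/ a <= tau m) ->
  exists j, (j <= m)%nat /\ in_piece K tau j a.
Proof.
  induction m as [|m IH]; intros Hm Hu; [lia|].
  destruct (Nat.eq_dec m 0) as [->|Hm0].
  - exists 1%nat; split; [lia|]. unfold in_piece; split; [lia|]. split; auto.
  - destruct (Rle_dec a (tau m)) as [Hle|Hgt].
    + destruct (IH ltac:(lia) (or_intror Hle)) as [j [Hj Hp]].
      exists j; split; [lia|exact Hp].
    + exists (S m); split; [lia|]. unfold in_piece; split; [lia|]. split.
      * right. replace (S m - 1)%nat with m by lia. lra.
      * exact Hu.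
Qed.

Lemma idx_nd (K : nat) (tau : nat -> R) (h : R -> R) :
  index_nondecreasing K tau h.
Proof.
  intros b1 b2 k1 k2 Hb [[a1 [H1 P1]] M1] [[a2 [H2 P2]] M2].
  destruct (Req_dec b1 b2) as [->|Hne].
  - apply M1. exists a2; split; auto.
  - assert (Ha : a1 <= a2).
    { specialize (H1 a2). specialize (H2 a1).
      destruct (Rle_dec a1 a2); auto.
      assert ((b2 - b1) * (a2 - a1) >= 0) by lra. nra. }
    destruct P2 as [Hk2 [Hl2 Hu2]].
    assert (Hu : (k2 = K \/ a1 <= tau k2)).
    { destruct Hu2; [left; auto | right; lra]. }
    destruct (find_piece K tau a1 k2 Hk2 Hu) as [j [Hj Hp]].
    assert (k1 <= j)%nat by (apply M1; exists a1; auto). lia.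
Qed.

Theorem lemma8 (N : nat) (tau : nat -> R) (p : nat -> quad) (g : R -> R) :
  consistent N tau p g -> semi_consistent N tau p g.
Proof.
  intros [Hpw [Hsc Hmin]].
  split; [exact Hpw|]. split; [exact Hsc|]. split.
  - intros k x Hk Hx.
    destruct Hpw as [_ [_ [_ [Hg _]]]].
    assert (E : g x = qeval (p k) x).
    { apply Hg. unfold in_piece. split; [lia|]. split; right; lra. }
    destruct (Hmin x) as [Hm _].
    assert (A := Hm (k - 1)%nat ltac:(lia)).
    assert (B := Hm (k + 1)%nat ltac:(lia)).
    apply Rmin_glb; lra.
  - intros k _. apply idx_nd.
Qed.
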